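(* Let $\Pi$ be constructed as below in a metric space of doubling dimension at most $\kappa$. For every point $p\in V$, every integer $r$, and every integer $\alpha\ge 0$, the set $$\Pi(p,r)=\{\langle j,r\rangle\in\Pi : d(p,j)<2^{\alpha}5^{r+1}\}$$ has at most $2^{(\alpha+1)\kappa}$ elements.
   Context: $(V,d)$ is a metric space of diameter $W$ whose doubling dimension is at most $\kappa$: every ball $B(x,\rho)=\{y\in V:d(x,y)\le\rho\}$ can be covered by $2^\kappa$ balls of radius $\rho/2$. $F\subseteq V$ is a finite set of facilities with opening costs $f_j>0$, $f_{\min}=\min_j f_j$. Let $\rho_{\min}=\lfloor\log_5 f_{\min}\rfloor$, $\rho_{\max}=\lceil\log_5 W\rceil$. For each integer $r\in[\rho_{\min},\rho_{\max}]$, let $J'_r=\{j\in F:f_j\le 5^r\}$ and let $J_r$ be a maximal subset of $J'_r$ such that any two facilities of $J_r$ are at distance greater than $5^{r+1}$. $\Pi=\{\langle j,r\rangle:\rho_{\min}\le r\le\rho_{\max},\ j\in J_r\}$. *)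

(* Defs.v *)
From Stdlib Require Export Reals List ZArith.
Export ListNotations.
Open Scope R_scope.

Definition is_metric {V : Type} (d : V -> V -> R) : Prop :=
  (forall x y, 0 <= d x y) /\
  (forall x y, d x y = 0 <-> x = y) /\
  (forall x y, d x y = d y x) /\
  (forall x y z, d x z <= d x y + d y z).

Definition ball {V : Type} (d : V -> V -> R) (x : V) (rho : R) : V -> Prop :=
  fun y => d x y <= rho.

Definition doubling_dim_le {V : Type} (d : V -> V -> R) (kappa : R) : Prop :=
  forall (x : V) (rho : R), 0 < rho ->
    exists C : list V, INR (length C) <= Rpower 2 kappa /\
      forall y, ball d x rho y -> exists c, In c C /\ ball d c (rho / 2) y.

Definition is_diameter {V : Type} (d : V -> V -> R) (W : R) : Prop :=
  is_lub (fun w => exists x y, w = d x y) W.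

Definition is_min_cost {V : Type} (F : list V) (f : V -> R) (fmin : R) : Prop :=
  (exists j, In j F /\ f j = fmin) /\ (forall j, In j F -> fmin <= f j).

Definition log5 (x : R) : R := ln x / ln 5.
(* Int_part x is the floor of x *)
Definition floorZ (x : R) : Z := Int_part x.
Definition ceilZ (x : R) : Z := (- Int_part (- x))%Z.

Definition rho_min (fmin : R) : Z := floorZ (log5 fmin).
Definition rho_max (W : R) : Z := ceilZ (log5 W).

Definition Jprime {V : Type} (F : list V) (f : V -> R) (r : Z) (j : V) : Prop :=
  In j F /\ f j <= powerRZ 5 r.

Definition maximal_separated {V : Type} (d : V -> V -> R) (F : list V) (f : V -> R)
    (r : Z) (Jr : V -> Prop) : Prop :=
  (forall j, Jr j -> Jprime F f r j) /\
  (forall a b, Jr a -> Jr b -> a <> b -> powerRZ 5 (r + 1) < d a b) /\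
  (forall j, Jprime F f r j -> ~ Jr j -> exists a, Jr a /\ d a j <= powerRZ 5 (r + 1)).

Definition Pi {V : Type} (rmin rmax : Z) (J : Z -> V -> Prop) (x : V * Z) : Prop :=
  (rmin <= snd x <= rmax)%Z /\ J (snd x) (fst x).

Definition Pi_pr {V : Type} (d : V -> V -> R) (rmin rmax : Z) (J : Z -> V -> Prop)
    (p : V) (r : Z) (alpha : nat) (x : V * Z) : Prop :=
  Pi rmin rmax J x /\ snd x = r /\ d p (fst x) < 2 ^ alpha * powerRZ 5 (r + 1).

Definition card_at_most {T : Type} (P : T -> Prop) (N : R) : Prop :=
  forall l : list T, NoDup l -> (forall x, In x l -> P x) -> INR (length l) <= N.

(* Main.v *)
Require Import Defs.
From Stdlib Require Import Reals List ZArith Lra Classical.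
Open Scope R_scope.

Lemma Rpower_ge0 x y : 0 <= Rpower x y.
Proof. unfold Rpower; left; apply exp_pos. Qed.

Lemma cover_list {V : Type} (d : V -> V -> R) kappa :
  doubling_dim_le d kappa -> forall s, 0 < s -> forall L : list V,
  exists C', INR (length C') <= INR (length L) * Rpower 2 kappa /\
    forall y c, In c L -> ball d c s y -> exists c', In c' C' /\ ball d c' (s/2) y.
Proof.
  intros Hdd s Hs L; induction L as [|a L IH].
  - exists nil; split; simpl; [lra|]. intros y c [].
  - destruct IH as [C' [Hl HC]]. destruct (Hdd a s Hs) as [Ca [Hla HCa]].
    exists (Ca ++ C'); split.
    + rewrite length_app, plus_INR. cbn [length]. rewrite S_INR. lra.
    + intros y c [<-|Hc] Hb.
      * destruct (HCa y Hb) as [c' [H1 H2]]; exists c'; split; auto; apply in_or_app; auto.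
      * destruct (HC y c Hc Hb) as [c' [H1 H2]]; exists c'; split; auto; apply in_or_app; auto.
Qed.

Lemma cover_iter {V : Type} (d : V -> V -> R) kappa :
  doubling_dim_le d kappa -> forall n x rho, 0 < rho ->
  exists C, INR (length C) <= Rpower 2 (INR n * kappa) /\
    forall y, ball d x rho y -> exists c, In c C /\ ball d c (rho / 2 ^ n) y.
Proof.
  intros Hdd n; induction n as [|n IH]; intros x rho Hr.
  - exists (x :: nil); split.
    + simpl. rewrite Rmult_0_l, Rpower_O; lra.
    + intros y Hy; exists x; split; [left; auto|]. simpl. unfold ball in *.
      replace (rho / 1) with rho by field. auto.
  - destruct (IH x rho Hr) as [C [HlC HC]].
    assert (Hs : 0 < rho / 2 ^ n) by (apply Rdiv_lt_0_compat; auto; apply pow_lt; lra).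
    destruct (cover_list d kappa Hdd _ Hs C) as [C' [Hl' HC']].
    exists C'; split.
    + eapply Rle_trans; [exact Hl'|]. rewrite S_INR.
      replace ((INR n + 1) * kappa) with (INR n * kappa + kappa) by ring.
      rewrite Rpower_plus. apply Rmult_le_compat_r; auto using Rpower_ge0.
    + intros y Hy. destruct (HC y Hy) as [c [Hc Hb]].
      destruct (HC' y c Hc Hb) as [c' [H1 H2]]. exists c'; split; auto.
      unfold ball in *. replace (rho / 2 ^ S n) with (rho / 2 ^ n / 2); auto.
      simpl. field. apply pow_nonzero; lra.
Qed.

Lemma F2_in_right {A B : Type} (Rel : A -> B -> Prop) l m :
  Forall2 Rel l m -> forall c, In c m -> exists y, In y l /\ Rel y c.
Proof.
  induction 1; intros c Hc; [destruct Hc|].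
  destruct Hc as [<-|Hc]; [exists x; split; [left|]; auto|].
  destruct (IHForall2 c Hc) as [z [Hz Hr]]; exists z; split; [right|]; auto.
Qed.

Lemma pigeon {A B : Type} (Rel : A -> B -> Prop) (l : list A) (C : list B) :
  NoDup l -> (forall x, In x l -> exists c, In c C /\ Rel x c) ->
  (forall x y c, In x l -> In y l -> Rel x c -> Rel y c -> x = y) ->
  exists m, Forall2 Rel l m /\ incl m C /\ NoDup m.
Proof.
  induction l as [|a l IH]; intros Hnd Hex Hinj.
  - exists nil; repeat split; auto using NoDup_nil. intros z [].
  - inversion Hnd as [|? ? Hna Hnd']; subst.
    destruct IH as [m [HF [Hi Hn]]]; auto.
    { intros; apply Hex; right; auto. }
    { intros x y c Hx Hy; apply Hinj; right; auto. }
    destruct (Hex a (or_introl eq_refl)) as [c [Hc Hac]].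
    exists (c :: m); repeat split.
    + constructor; auto.
    + intros z [<-|Hz]; auto.
    + constructor; auto. intro Hcm.
      destruct (F2_in_right Rel l m HF c Hcm) as [y [Hy Hyc]].
      assert (a = y) by (apply (Hinj a y c); auto; [left|right]; auto).
      subst; contradiction.
Qed.

Theorem lemma3 (V : Type) (d : V -> V -> R) (kappa W : R) (F : list V)
    (f : V -> R) (fmin : R) (J : Z -> V -> Prop) :
  is_metric d ->
  doubling_dim_le d kappa ->
  is_diameter d W ->
  (forall j, In j F -> 0 < f j) ->
  is_min_cost F f fmin ->
  (forall r : Z, (rho_min fmin <= r <= rho_max W)%Z -> maximal_separated d F f r (J r)) ->
  forall (p : V) (r : Z) (alpha : nat),
    card_at_most (Pi_pr d (rho_min fmin) (rho_max W) J p r alpha)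
      (Rpower 2 ((INR alpha + 1) * kappa)).
Proof.
  intros Hm Hdd _ _ _ Hms p r alpha l Hnd Hl.
  destruct Hm as [Hpos [Hzero [Hsym Htri]]].
  assert (H5 : 0 < powerRZ 5 (r + 1)) by (apply powerRZ_lt; lra).
  assert (Hrho : 0 < 2 ^ alpha * powerRZ 5 (r + 1))
    by (apply Rmult_lt_0_compat; auto; apply pow_lt; lra).
  destruct (cover_iter d kappa Hdd (S alpha) p _ Hrho) as [C [HlC HC]].
  rewrite <- S_INR.
  set (Rel := fun (x : V * Z) c => ball d c (powerRZ 5 (r + 1) / 2) (fst x)).
  destruct (pigeon Rel l C Hnd) as [m [HF [Hi Hn]]].
  - intros x Hx. destruct (Hl x Hx) as [_ [_ Hd]].
    destruct (HC (fst x)) as [c [Hc Hb]]. { unfold ball; lra. }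
    exists c; split; auto. unfold Rel, ball in *.
    replace (powerRZ 5 (r + 1) / 2) with (2 ^ alpha * powerRZ 5 (r + 1) / 2 ^ S alpha); auto.
    simpl. field. apply pow_nonzero; lra.
  - intros [a ra] [b rb] c Hx Hy Ha Hb.
    destruct (Hl _ Hx) as [[Hra HJa] [Hsa _]]. destruct (Hl _ Hy) as [[_ HJb] [Hsb _]].
    simpl in *; subst.
    destruct (classic (a = b)) as [->|Hne]; auto.
    destruct (Hms _ Hra) as [_ [Hsep _]].
    specialize (Hsep a b HJa HJb Hne).
    unfold Rel, ball in *; simpl in *.
    specialize (Htri a c b). rewrite (Hsym a c) in Htri. lra.
  - apply Forall2_length in HF. rewrite HF.
    eapply Rle_trans; [|exact HlC]. apply le_INR. apply NoDup_incl_length; auto.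
Qed.
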